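(* Let $T = T_d(I)$ be a balanced triangular region. The following statements hold. \begin{enumerate} \item Let $\tau$ and $\tau'$ be two lozenge tilings of $T$. Then their perfect matching signs are the same if and only if their lattice path signs are the same, that is, \[ \operatorname{sgn}_{\mathrm{pm}}(\tau) \cdot \operatorname{sgn}_{\mathrm{lp}}(\tau) = \operatorname{sgn}_{\mathrm{pm}}(\tau') \cdot \operatorname{sgn}_{\mathrm{lp}}(\tau'). \] \item In particular, we have that \[ |\det{Z(T)}| = |\det{N(T)}|. \] \end{enumerate}
   Context: Let $R=K[x,y,z]$ and $I\subset R$ a monomial ideal. The triangular region $\mathcal{T}_d$ is an equilateral triangle of side length $d$ subdivided into unit triangles; the downward-pointing unit triangles are labeled by the monomials of degree $d-2$ and the upward-pointing ones by the monomials of degree $d-1$ ($x^{d-1}$ at the top, $y^{d-1}$ bottom-left, $z^{d-1}$ bottom-right, and an upward triangle sharing an edge with a downward triangle has label equal to the downward label times a variable). $T_d(I)$ is obtained from $\mathcal{T}_d$ by removing the triangles whose labels lie in $I$. It is balanced if it has as many upward- as downward-pointing unit triangles. A lozenge is a union of two unit triangles sharing an edge; a lozenge tiling covers every triangle of $T$ by exactly one lozenge. Monomials are ordered by graded reverse-lexicographic order. $Z(T)$ is the bi-adjacency matrix of the bipartite graph whose vertices are the centers $B_1,\dots$ of the downward triangles and $W_1,\dots$ of the upward triangles of $T$ (each ordered by reverse-lex order of labels), with $Z(T)_{(i,j)}=1$ iff the triangles $B_i$ and $W_j$ share an edge. A tiling $\tau$ gives a perfect matching, i.e. a bijection $\pi$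 viewed as a permutation; the perfect matching sign is $\operatorname{sgn}_{\mathrm{pm}}(\tau):=\operatorname{sgn}(\pi)$. $L(T)$ is the set of midpoints of the edges of triangles of $T$ parallel to the upper-left boundary of $\mathcal{T}_d$, viewed as a sub-lattice of $\mathbb{Z}^2$ (steps East or Southeast). $A_1,\dots,A_m$ are the vertices of $L(T)$ lying only on upward-pointing triangles of $T$, and $E_1,\dots,E_m$ those lying only on downward-pointing triangles of $T$, each ordered from smallest to largest in reverse-lex order of the label of the upward triangle whose upper-left edge contains the vertex. $N(T)_{(i,j)}$ is the number of lattice paths in $\mathbb{Z}^2$ from $A_i$ to $E_j$. A tiling $\tau$ determines a family of non-intersecting lattice paths (joining the vertices of $L(T)$ on each lozenge); if the path starting at $A_i$ ends at $E_{\lambda(i)}$, the lattice path sign is $\operatorname{sgn}_{\mathrm{lp}}(\tau):=\operatorname{sgn}(\lambda)$. *)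

(* Defs.v *)
From mathcomp Require Import all_boot all_order all_algebra all_fingroup.
Set Implicit Arguments. Unset Strict Implicit. Unset Printing Implicit Defensive.
Import GRing.Theory Num.Theory.

(* A monomial x^a y^b z^c of K[x,y,z] is represented by its exponent triple
   (a, b, c).  Projections: *)
Definition mono := (nat * nat * nat)%type.
Definition ex (m : mono) : nat := m.1.1.
Definition ey (m : mono) : nat := m.1.2.
Definition ez (m : mono) : nat := m.2.
Definition mono0 : mono := (0, 0, 0).

(* A monomial ideal I of K[x,y,z] is determined by the set of monomials it
   contains, which is an arbitrary set of monomials closed under
   multiplication by the variables.  We represent I by that set. *)
Definition monomial_ideal (I : pred mono) : Prop :=
  forall a b c, I (a, b, c) ->
    [&& I (a.+1, b, c), I (a, b.+1, c) & I (a, b, c.+1)].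

Definition monos (k : nat) : seq mono :=
  flatten [seq [seq (a, b, k - a - b) | b <- iota 0 (k - a).+1]
          | a <- iota 0 k.+1].

(* Graded reverse-lexicographic order (x > y > z) on monomials of the same
   degree: m <= m' iff m = m' or the last nonzero entry of m - m' is
   negative, i.e. m has larger z-exponent, or equal z-exponent and larger
   y-exponent. *)
Definition revlex_le (m m' : mono) : bool :=
  (ez m' < ez m) || ((ez m == ez m') && (ey m' <= ey m)).

(* Labels of the downward (degree d-2) and upward (degree d-1) unit
   triangles of T_d(I), i.e. those of the triangle T_d not in I, sorted
   increasingly in reverse-lex order. *)
Definition downs (d : nat) (I : pred mono) : seq mono :=
  if d is k.+2 then sort revlex_le [seq m <- monos k | ~~ I m] else [::].
Definition ups (d : nat) (I : pred mono) : seq mono :=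
  if d is k.+1 then sort revlex_le [seq m <- monos k | ~~ I m] else [::].

Definition B (d : nat) (I : pred mono) (i : nat) : mono := nth mono0 (downs d I) i.
Definition W (d : nat) (I : pred mono) (j : nat) : mono := nth mono0 (ups d I) j.

(* The downward triangle labelled m and the upward triangle labelled u share
   an edge iff u = m*x, m*y or m*z. *)
Definition adj (m u : mono) : bool :=
  [|| u == ((ex m).+1, ey m, ez m), u == (ex m, (ey m).+1, ez m)
    | u == (ex m, ey m, (ez m).+1)].

Definition Zmat (d : nat) (I : pred mono) (n : nat) : 'M[int]_n :=
  \matrix_(i < n, j < n) (adj (B d I i) (W d I j))%:R%R.

(* Lozenge tilings of T correspond exactly to perfect matchings of the
   bipartite graph, i.e. to permutations pi with B_i adjacent to W_(pi i). *)
Definition is_tiling (d : nat) (I : pred mono) (n : nat) (pi : 'S_n) : Prop :=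
  forall i : 'I_n, adj (B d I i) (W d I (pi i)).

Definition psign (m : nat) (s : 'S_m) : int := ((-1) ^+ odd_perm s)%R.

Definition sgn_pm (d : nat) (I : pred mono) (n : nat) (pi : 'S_n) : int :=
  psign pi.

(* Each edge of T_d parallel to the upper-left boundary is the upper-left
   edge of a unique upward triangle of T_d; we label the corresponding
   vertex of L by the label u (degree d-1) of that upward triangle.
   That edge is also the right edge of the downward triangle u/z (if z | u).
   It belongs to T iff one of these two triangles is in T. *)
Definition on_up (I : pred mono) (u : mono) : bool := ~~ I u.
Definition on_down (I : pred mono) (u : mono) : bool :=
  (0 < ez u) && ~~ I (ex u, ey u, (ez u).-1).
Definition is_vert (I : pred mono) (u : mono) : bool := on_up I u || on_down I u.
Definition is_A (I : pred mono) (u : mono) : bool := on_up I u && ~~ on_down I u.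
Definition is_E (I : pred mono) (u : mono) : bool := ~~ on_up I u && on_down I u.

Definition labels (d : nat) : seq mono := if d is k.+1 then monos k else [::].

Definition Avs (d : nat) (I : pred mono) : seq mono :=
  sort revlex_le [seq u <- labels d | is_A I u].
Definition Evs (d : nat) (I : pred mono) : seq mono :=
  sort revlex_le [seq u <- labels d | is_E I u].
Definition Av d I (i : nat) : mono := nth mono0 (Avs d I) i.
Definition Ev d I (j : nat) : mono := nth mono0 (Evs d I) j.

(* The two lattice steps (East and Southeast in Z^2): from the vertex
   labelled u to the one labelled u*z/y or u*z/x. *)
Definition geo_step (u v : mono) : bool :=
  ((0 < ey u) && (v == (ex u, (ey u).-1, (ez u).+1))) ||
  ((0 < ex u) && (v == ((ex u).-1, ey u, (ez u).+1))).

Definition lstep (I : pred mono) : rel mono :=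
  fun u v => [&& is_vert I u, is_vert I v & geo_step u v].

Fixpoint npaths (Wl : seq mono) (step : rel mono) (k : nat) (u v : mono) : nat :=
  match k with
  | 0 => (u == v : nat)
  | k'.+1 => (u == v : nat) + \sum_(w <- Wl) (step u w : nat) * npaths Wl step k' w v
  end.

(* Lattice path matrix N(T): number of lattice paths in L(T) from A_i to E_j
   (each step increases the z-exponent, so paths have at most d steps). *)
Definition Nmat (d : nat) (I : pred mono) : 'M[int]_(size (Avs d I)) :=
  \matrix_(i, j) (npaths (labels d) (lstep I) d (Av d I i) (Ev d I j))%:Z%R.

Definition matched (d : nat) (I : pred mono) (n : nat) (pi : 'S_n)
  (m u : mono) : bool :=
  [exists i : 'I_n, (B d I i == m) && (W d I (pi i) == u)].

(* Step of the path system of a tiling: joining the two vertices of L(T)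
   lying on a lozenge (up u together with down u/y, resp. u/x). *)
Definition tstep (d : nat) (I : pred mono) (n : nat) (pi : 'S_n) : rel mono :=
  fun u v =>
    ((0 < ey u) && matched d I pi (ex u, (ey u).-1, ez u) u
               && (v == (ex u, (ey u).-1, (ez u).+1))) ||
    ((0 < ex u) && matched d I pi ((ex u).-1, ey u, ez u) u
               && (v == ((ex u).-1, ey u, (ez u).+1))).

Definition treach (d : nat) (I : pred mono) (n : nat) (pi : 'S_n) (u v : mono) : bool :=
  0 < npaths (labels d) (tstep d I pi) d u v.

(* lambda: the permutation with the path from A_i ending at E_(lambda i);
   sgn_lp is its sign (0 if no such permutation exists, which does not
   happen for tilings). *)
Definition sgn_lp (d : nat) (I : pred mono) (n : nat) (pi : 'S_n) : int :=
  match [pick s : 'S_(size (Avs d I)) |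
         [forall i : 'I_(size (Avs d I)), treach d I pi (Av d I i) (Ev d I (s i))]] with
  | Some s => psign s
  | None => 0%R
  end.

(* Main.v *)
Require Import Defs.
From mathcomp Require Import all_boot all_order all_algebra all_fingroup.
From mathcomp Require Import zify.
Import GRing.Theory Num.Theory.
Set Implicit Arguments. Unset Strict Implicit. Unset Printing Implicit Defensive.

Lemma mem_monos k (m : mono) : (m \in monos k) = (ex m + ey m + ez m == k)%N.
Proof.
case: m => [[a b] c]; rewrite /ex /ey /ez /=.
apply/flatten_mapP/eqP.
- case=> a' ha' /mapP [b' hb' [-> -> ->]]; move: ha' hb'; rewrite !mem_iota; lia.
- move=> h; exists a; first by rewrite mem_iota; lia.
  apply/mapP; exists b; first by rewrite mem_iota; lia.
  congr (_, _, _); lia.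
Qed.

Lemma uniq_monos k : uniq (monos k).
Proof.
apply: allpairs_uniq_dep; first exact: iota_uniq.
  by move=> x _; exact: iota_uniq.
move=> [a b] [a' b'] _ _ /= [ea eb]; subst a'.
by subst b'.
Qed.

Definition revlex_trans : transitive revlex_le.
Proof.
move=> y x z; rewrite /revlex_le.
case/orP => [h1|/andP[/eqP h1 h2]]; case/orP => [h3|/andP[/eqP h3 h4]];
 apply/orP; (try by left; lia); right; apply/andP; split; apply/eqP || idtac; lia.
Qed.

Definition revlex_total : total revlex_le.
Proof.
move=> [[a b] c] [[a' b'] c']; rewrite /revlex_le /ex /ey /ez /=.
case: (ltngtP c c') => h; rewrite ?orbT //.
by subst => /=; case: leqP => // /ltnW ->; rewrite orbT.
Qed.

Definition revlex_refl : reflexive revlex_le.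
Proof. by move=> x; rewrite /revlex_le eqxx leqnn orbT. Qed.

Definition mz (m : mono) : mono := (ex m, ey m, (ez m).+1).
Definition Rl d I := Evs d I ++ ups d I.
Definition Cl d I := Avs d I ++ map mz (downs d I).
Definition VL d I := [seq u <- labels d | is_vert I u].

Lemma mem_labels d u : (u \in labels d) = (0 < d)%N && (ex u + ey u + ez u == d.-1)%N.
Proof. by case: d => [|k] //=; rewrite mem_monos. Qed.

Lemma uniq_labels d : uniq (labels d).
Proof. by case: d => [|k] //=; exact: uniq_monos. Qed.

Lemma mem_ups d I u : (u \in ups d I) = (u \in labels d) && ~~ I u.
Proof. by case: d => [|k] //; rewrite /ups /labels mem_sort mem_filter andbC. Qed.

Lemma uniq_ups d I : uniq (ups d I).
Proof. by case: d => [|k] //; rewrite /ups sort_uniq filter_uniq // uniq_monos. Qed.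

Lemma mem_downs d I m : (m \in downs d I) =
  (1 < d)%N && (ex m + ey m + ez m == d.-2)%N && ~~ I m.
Proof. by case: d => [|[|k]] //; rewrite /downs mem_sort mem_filter mem_monos andbC. Qed.

Lemma uniq_downs d I : uniq (downs d I).
Proof. by case: d => [|[|k]] //; rewrite /downs sort_uniq filter_uniq // uniq_monos. Qed.

Lemma mem_Avs d I u : (u \in Avs d I) = (u \in labels d) && is_A I u.
Proof. by rewrite /Avs mem_sort mem_filter andbC. Qed.
Lemma mem_Evs d I u : (u \in Evs d I) = (u \in labels d) && is_E I u.
Proof. by rewrite /Evs mem_sort mem_filter andbC. Qed.
Lemma uniq_Avs d I : uniq (Avs d I).
Proof. by rewrite /Avs sort_uniq filter_uniq // uniq_labels. Qed.
Lemma uniq_Evs d I : uniq (Evs d I).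
Proof. by rewrite /Evs sort_uniq filter_uniq // uniq_labels. Qed.

Lemma mz_inj : injective mz.
Proof. by move=> [[a b] c] [[a1 b1] c1]; rewrite /mz /ex /ey /ez /= => -[-> -> ->]. Qed.

Lemma mem_mzdowns d I u : (u \in map mz (downs d I)) = (u \in labels d) && on_down I u.
Proof.
apply/mapP/idP.
- case=> m; rewrite mem_downs => /andP[/andP[h1 h2] h3] ->.
  move: m h1 h2 h3 => [[a b] c]; rewrite mem_labels /on_down /mz /ex /ey /ez /= => h1 h2 h3.
  rewrite h3 andbT; apply/andP; split; [lia| apply/eqP; lia].
- case: u => [[a b] c]; rewrite mem_labels /on_down /ex /ey /ez /= => /andP[/andP[h1 h2] /andP[h3 h4]].
  exists (a, b, c.-1); last by rewrite /mz /ex /ey /ez /=; congr (_,_,_); lia.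
  rewrite mem_downs /ex /ey /ez /= h4 andbT; apply/andP; split; lia.
Qed.

Lemma uniq_Rl d I : uniq (Rl d I).
Proof.
rewrite /Rl cat_uniq uniq_Evs uniq_ups /= andbT; apply/hasPn => u.
rewrite mem_ups mem_Evs /is_E /on_up => /andP[_ ->]; by rewrite andbF.
Qed.

Lemma uniq_Cl d I : uniq (Cl d I).
Proof.
rewrite /Cl cat_uniq uniq_Avs (map_inj_uniq mz_inj) uniq_downs /= andbT; apply/hasPn => u.
rewrite mem_mzdowns mem_Avs /is_A => /andP[_ ->]; by rewrite !andbF.
Qed.

Lemma mem_Rl d I u : (u \in Rl d I) = (u \in VL d I).
Proof.
rewrite /Rl /VL mem_cat mem_Evs mem_ups mem_filter /is_E /is_vert /on_up.
by case: (u \in labels d); case: (I u); case: (on_down I u).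
Qed.

Lemma mem_Cl d I u : (u \in Cl d I) = (u \in VL d I).
Proof.
rewrite /Cl /VL mem_cat mem_Avs mem_mzdowns mem_filter /is_A /is_vert /on_up.
by case: (u \in labels d); case: (I u); case: (on_down I u).
Qed.

Lemma uniq_VL d I : uniq (VL d I).
Proof. by rewrite filter_uniq // uniq_labels. Qed.

Lemma size_Rl d I : size (Rl d I) = size (VL d I).
Proof. by apply: perm_size; apply: uniq_perm; [exact: uniq_Rl|exact: uniq_VL|exact: mem_Rl]. Qed.
Lemma size_Cl d I : size (Cl d I) = size (VL d I).
Proof. by apply: perm_size; apply: uniq_perm; [exact: uniq_Cl|exact: uniq_VL|exact: mem_Cl]. Qed.

Lemma size_EA d I : size (ups d I) = size (downs d I) -> size (Evs d I) = size (Avs d I).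
Proof.
move=> h; have := size_Rl d I; rewrite -size_Cl /Rl /Cl !size_cat size_map h.
by move/eqP; rewrite eqn_add2r => /eqP.
Qed.

Set Implicit Arguments. Unset Strict Implicit. Unset Printing Implicit Defensive.
Local Open Scope ring_scope.

Definition incz (G : rel mono) := forall x y, G x y -> ez y = (ez x).+1.
Definition adm I (G : rel mono) := incz G /\ forall x y, G x y -> is_vert I y.

Lemma labels_ez d w : w \in labels d -> (ez w < d)%N.
Proof. rewrite mem_labels => /andP[h /eqP]; lia. Qed.

Lemma npathsS Wl (G : rel mono) k u v : npaths Wl G k.+1 u v =
  ((u == v) + \sum_(w <- Wl) G u w * npaths Wl G k w v)%N.
Proof. by []. Qed.

Lemma stab d G (hG : incz G) k : forall u v, (d <= ez u + k)%N ->
  npaths (labels d) G k.+1 u v = npaths (labels d) G k u v.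
Proof.
elim: k => [|k IH] u v h.
  rewrite /= big1_seq ?addn0 // => w /andP[_ /labels_ez hw].
  case Guw: (G u w); last by rewrite mul0n.
  by move: (hG _ _ Guw) hw h; lia.
rewrite npathsS [in RHS]npathsS; congr (_ + _)%N; apply: eq_big_seq => w _.
case Guw: (G u w); last by rewrite !mul0n.
by rewrite IH //; move: (hG _ _ Guw) h; lia.
Qed.

Lemma stab2 d G (hG : incz G) k m u v : (d <= ez u + k)%N -> (k <= m)%N ->
  npaths (labels d) G m u v = npaths (labels d) G k u v.
Proof.
move=> h; elim: m => [|m IH]; first by rewrite leqn0 => /eqP ->.
rewrite leq_eqVlt => /orP[/eqP -> //|]; rewrite ltnS => hk.
by rewrite stab ?IH //; lia.
Qed.

Lemma recn d G (hG : incz G) u v :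
  npaths (labels d) G d u v =
  ((u == v) + \sum_(w <- labels d) G u w * npaths (labels d) G d w v)%N.
Proof.
case: d => [|d]; first by rewrite /labels big_nil addn0.
rewrite npathsS; congr (_ + _)%N; apply: eq_big_seq => w _.
case Guw: (G u w); last by rewrite !mul0n.
by rewrite (@stab2 d.+1 G hG d d.+1) //; move: (hG _ _ Guw); lia.
Qed.

Definition Lf (G : rel mono) (x y : mono) : int := (x == y)%:R - (G x y)%:R.
Definition Cf d (G : rel mono) (x y : mono) : int := (npaths (labels d) G d x y)%:R.

Definition Lmat d I n G : 'M[int]_(size (Avs d I) + n) :=
  \matrix_(i, j) Lf G (nth mono0 (Rl d I) i) (nth mono0 (Cl d I) j).
Definition Cmat d I n G : 'M[int]_(size (Avs d I) + n) :=
  \matrix_(i, j) Cf d G (nth mono0 (Cl d I) i) (nth mono0 (Rl d I) j).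

Lemma size_Cl_n d I n : size (downs d I) = n -> size (Cl d I) = (size (Avs d I) + n)%N.
Proof. by move=> h; rewrite /Cl size_cat size_map h. Qed.
Lemma size_Rl_n d I n : size (downs d I) = n -> size (ups d I) = n ->
  size (Rl d I) = (size (Avs d I) + n)%N.
Proof. by move=> h1 h2; rewrite /Rl size_cat h2 size_EA // h1 h2. Qed.

Lemma perm_Cl d I : perm_eq (Cl d I) (VL d I).
Proof. by apply: uniq_perm; [exact: uniq_Cl|exact: uniq_VL|exact: mem_Cl]. Qed.

Lemma LC d I n G : adm I G -> size (downs d I) = n -> size (ups d I) = n ->
  Lmat d I n G *m Cmat d I n G = 1%:M.
Proof.
move=> [hG hV] hd hu; apply/matrixP => i j; rewrite !mxE.
set x := nth mono0 (Rl d I) i; set y := nth mono0 (Rl d I) j.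
have -> : \sum_j0 Lmat d I n G i j0 * Cmat d I n G j0 j =
          \sum_(w <- Cl d I) Lf G x w * Cf d G w y.
  rewrite (big_nth mono0) (size_Cl_n hd) big_mkord; apply: eq_bigr => l _.
  by rewrite !mxE.
have xV : x \in VL d I.
  by rewrite -mem_Rl mem_nth // (size_Rl_n hd hu).
rewrite (perm_big _ (perm_Cl d I)) /=.
under eq_bigr do rewrite /Lf mulrBl.
rewrite sumrB (bigD1_seq x) ?uniq_VL //= eqxx mul1r big1 ?addr0; last first.
  by move=> w; rewrite eq_sym => /negbTE ->; rewrite mul0r.
rewrite /VL big_filter.
have -> : \sum_(w <- labels d | is_vert I w) (G x w)%:R * Cf d G w y =
          \sum_(w <- labels d) (G x w)%:R * Cf d G w y.
  rewrite big_mkcond /=; apply: eq_bigr => w _.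
  by case Gxw: (G x w); [rewrite (hV _ _ Gxw) | rewrite mul0r if_same].
rewrite /Cf recn // natrD natr_sum; under eq_bigr do rewrite natrM; rewrite addrK.
have si : (i < size (Rl d I))%N by rewrite (size_Rl_n hd hu).
have sj : (j < size (Rl d I))%N by rewrite (size_Rl_n hd hu).
by rewrite /x /y (nth_uniq mono0 si sj (uniq_Rl d I)).
Qed.

Lemma block_det d I n G : adm I G -> size (downs d I) = n -> size (ups d I) = n ->
  \det (Lmat d I n G) * \det (ulsubmx (Cmat d I n G)) = \det (drsubmx (Lmat d I n G)).
Proof.
move=> hG hd hu.
have hLC := LC hG hd hu.
set L := Lmat d I n G in hLC *; set C := Cmat d I n G in hLC *.
move: hLC; rewrite -[L]submxK -[C]submxK mulmx_block scalar_mx_block.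
case/eq_block_mx => h1 h2 h3 h4.
have : L *m block_mx (ulsubmx C) 0 (dlsubmx C) 1%:M =
       block_mx 1%:M (ursubmx L) 0 (drsubmx L).
  by rewrite -[L in LHS]submxK mulmx_block !mulmx0 !mulmx1 !add0r h1 h3.
move/(congr1 determinant); rewrite det_mulmx det_lblock det_ublock !det1 mulr1 mul1r.
by rewrite !submxK.
Qed.

Definition Vs d I := sort revlex_le (VL d I).

Lemma Vs_tri d I (G : rel mono) (hG : incz G) p q : (p < q < size (Vs d I))%N ->
  Lf G (nth mono0 (Vs d I) p) (nth mono0 (Vs d I) q) = 0.
Proof.
case/andP=> pq qs.
have ps : (p < size (Vs d I))%N by apply: ltn_trans qs.
have hs := sort_sorted revlex_total (VL d I).
have := sorted_leq_nth revlex_trans revlex_refl mono0 (s := Vs d I) hs p q ps qs (ltnW pq).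
rewrite /Lf.
have un : uniq (Vs d I) by rewrite /Vs sort_uniq uniq_VL.
rewrite (nth_uniq mono0 ps qs un) (ltn_eqF pq) /=.
case Gab: (G _ _); last by rewrite subrr.
move: (hG _ _ Gab); rewrite /revlex_le => ->; case/orP; first lia.
by case/andP => /eqP; lia.
Qed.

Lemma Vs_diag (G : rel mono) (hG : incz G) x : Lf G x x = 1.
Proof.
rewrite /Lf eqxx; case Gxx: (G x x); last by rewrite subr0.
by move: (hG _ _ Gxx); lia.
Qed.

Lemma size_Vs d I : size (Vs d I) = size (VL d I).
Proof. by rewrite /Vs size_sort. Qed.

Lemma mem_Vs d I x : (x \in Vs d I) = (x \in VL d I).
Proof. by rewrite /Vs mem_sort. Qed.

Lemma det_LV d I N (G : rel mono) (hG : incz G) (hN : size (Vs d I) = N) :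
  \det (\matrix_(p < N, q < N) Lf G (nth mono0 (Vs d I) p) (nth mono0 (Vs d I) q)) = 1.
Proof.
rewrite det_trig.
  by rewrite big1 // => i _; rewrite mxE Vs_diag.
apply/is_trig_mxP => p q pq; rewrite mxE; apply: Vs_tri => //.
by rewrite pq hN ltn_ord.
Qed.

Lemma det_L_const d I n G1 G2 : incz G1 -> incz G2 ->
  size (downs d I) = n -> size (ups d I) = n ->
  \det (Lmat d I n G1) = \det (Lmat d I n G2).
Proof.
move=> h1 h2 hd hu.
set N := (size (Avs d I) + n)%N.
have hN : size (Vs d I) = N by rewrite size_Vs -size_Cl (size_Cl_n hd).
have un : uniq (Vs d I) by rewrite /Vs sort_uniq uniq_VL.
have hsR : forall i : 'I_N, (index (nth mono0 (Rl d I) i) (Vs d I) < N)%N.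
  move=> i; suff : (index (nth mono0 (Rl d I) i) (Vs d I) < size (Vs d I))%N by rewrite hN.
  rewrite index_mem mem_Vs -mem_Rl mem_nth //.
  by rewrite (size_Rl_n hd hu).
have hsC : forall i : 'I_N, (index (nth mono0 (Cl d I) i) (Vs d I) < N)%N.
  move=> i; suff : (index (nth mono0 (Cl d I) i) (Vs d I) < size (Vs d I))%N by rewrite hN.
  rewrite index_mem mem_Vs -mem_Cl mem_nth //.
  by rewrite (size_Cl_n hd).
pose s := fun i : 'I_N => Ordinal (hsR i).
pose t := fun i : 'I_N => Ordinal (hsC i).
have sinj : injective s.
  move=> i j /(congr1 val) /= /(congr1 (nth mono0 (Vs d I))).
  rewrite !nth_index ?mem_Vs -?mem_Rl ?mem_nth ?(size_Rl_n hd hu) //.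
  move/eqP; rewrite nth_uniq ?(size_Rl_n hd hu) ?uniq_Rl // => /eqP ij.
  exact: val_inj.
have tinj : injective t.
  move=> i j /(congr1 val) /= /(congr1 (nth mono0 (Vs d I))).
  rewrite !nth_index ?mem_Vs -?mem_Cl ?mem_nth ?(size_Cl_n hd) //.
  move/eqP; rewrite nth_uniq ?(size_Cl_n hd) ?uniq_Cl // => /eqP ij.
  exact: val_inj.
have key : forall G, incz G -> \det (Lmat d I n G) =
   \det (perm_mx (perm sinj) : 'M[int]_N) * \det (perm_mx (perm tinj)^-1 : 'M[int]_N).
  move=> G hG.
  set LV := \matrix_(p < N, q < N) Lf G (nth mono0 (Vs d I) p) (nth mono0 (Vs d I) q).
  have -> : Lmat d I n G = row_perm (perm sinj) (col_perm (perm tinj) LV).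
    apply/matrixP => i j; rewrite !mxE !permE /=.
    rewrite !nth_index //.
      by rewrite mem_Vs -mem_Cl mem_nth // (size_Cl_n hd).
    by rewrite mem_Vs -mem_Rl mem_nth // (size_Rl_n hd hu).
  by rewrite row_permE col_permE !det_mulmx det_LV // mul1r.
by rewrite (key _ h1) (key _ h2).
Qed.

Set Implicit Arguments. Unset Strict Implicit. Unset Printing Implicit Defensive.
Local Open Scope ring_scope.

Lemma detL_unit d I n G : adm I G -> size (downs d I) = n -> size (ups d I) = n ->
  `|\det (Lmat d I n G)| = 1 /\ \det (Lmat d I n G) * \det (Lmat d I n G) = 1.
Proof.
move=> hG hd hu.
have := congr1 determinant (LC hG hd hu); rewrite det_mulmx det1 mulrC => /intUnitRing.unitzPl.
by rewrite qualifE => /orP[] /eqP ->; rewrite ?normrN normr1 ?mulrNN mulr1.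
Qed.

Lemma adm_lstep I : adm I (lstep I).
Proof.
split=> [[[a b] c] [[a' b'] c']|x y].
  rewrite /lstep /geo_step /ex /ey /ez /= => /and3P[_ _].
  by case/orP => /andP[_ /eqP [_ _ ->]].
by rewrite /lstep => /and3P[].
Qed.

Lemma nth_Rl_l d I n (hd : size (downs d I) = n) (hu : size (ups d I) = n) (i : 'I_(size (Avs d I))) :
  nth mono0 (Rl d I) (lshift n i) = Ev d I i.
Proof. by rewrite /Rl nth_cat /= (size_EA (etrans hu (esym hd))) ltn_ord. Qed.
Lemma nth_Cl_l d I n (i : 'I_(size (Avs d I))) :
  nth mono0 (Cl d I) (lshift n i) = Av d I i.
Proof. by rewrite /Cl nth_cat /= ltn_ord. Qed.
Lemma nth_Rl_r d I n (hd : size (downs d I) = n) (hu : size (ups d I) = n) (i : 'I_n) :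
  nth mono0 (Rl d I) (rshift (size (Avs d I)) i) = W d I i.
Proof.
by rewrite /Rl nth_cat /= (size_EA (etrans hu (esym hd))) ltnNge leq_addr /= addKn.
Qed.
Lemma nth_Cl_r d I n (hd : size (downs d I) = n) (i : 'I_n) :
  nth mono0 (Cl d I) (rshift (size (Avs d I)) i) = mz (B d I i).
Proof.
rewrite /Cl nth_cat /= ltnNge leq_addr /= addKn (nth_map mono0) //.
by rewrite hd.
Qed.

Lemma ulC d I n (hd : size (downs d I) = n) (hu : size (ups d I) = n) :
  ulsubmx (Cmat d I n (lstep I)) = Nmat d I.
Proof.
apply/matrixP => i j; rewrite !mxE nth_Rl_l // nth_Cl_l.
by rewrite /Cf natz.
Qed.

Lemma sgn2 (R : pzRingType) k : (-1)^+k * (-1)^+k = 1 :> R.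
Proof. by rewrite -exprD addnn -mul2n exprM expr2 mulrNN mulr1 expr1n. Qed.

Lemma entry_Z I u m : ~~ I u -> ~~ I m ->
  Lf (lstep I) u (mz m) = (-1)^+(ez u) * (-1)^+(ez m).+1 * (adj m u)%:R.
Proof.
move: u m => [[a b] c] [[a' b'] c'] hu hm; rewrite /Lf.
have -> : lstep I (a, b, c) (mz (a', b', c')) = geo_step (a, b, c) (mz (a', b', c')).
  by rewrite /lstep /is_vert /on_up /on_down /mz /ex /ey /ez /= hu hm !orbT.
rewrite /geo_step /adj /mz /ex /ey /ez /=.
have [[-> -> ->]|ne1] := eqVneq (a, b, c) (a', b', c'.+1).
  rewrite !xpair_eqE ?eqxx ?(ltn_eqF (ltnSn _)) ?(gtn_eqF (ltnSn _)) ?andbF ?andbT ?orbF ?orbT /=.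
  by rewrite subr0 mulr1 sgn2.
have [[-> -> ->]|ne2] := eqVneq (a, b, c) (a'.+1, b', c').
  rewrite !xpair_eqE ?eqxx ?(ltn_eqF (ltnSn _)) ?(gtn_eqF (ltnSn _)) ?andbF ?andbT ?orbF ?orbT /=.
  by rewrite exprS mulrCA sgn2 !mulr1 sub0r.
have [[-> -> ->]|ne3] := eqVneq (a, b, c) (a', b'.+1, c').
  rewrite !xpair_eqE ?eqxx ?(ltn_eqF (ltnSn _)) ?(gtn_eqF (ltnSn _)) ?andbF ?andbT ?orbF ?orbT /=.
  by rewrite exprS mulrCA sgn2 !mulr1 sub0r.
have -> : ((0 < b)%N && ((a', b', c'.+1) == (a, b.-1, c.+1))
  || (0 < a)%N && ((a', b', c'.+1) == (a.-1, b, c.+1))) = false.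
  apply/negbTE/negP; case/orP => /andP[h /eqP [e1 e2 e3]].
    by move/negP: ne3; apply; apply/eqP; congr (_,_,_); lia.
  by move/negP: ne2; apply; apply/eqP; congr (_,_,_); lia.
by rewrite /= mulr0 subr0.
Qed.

Lemma W_notI d I n (hu : size (ups d I) = n) (i : 'I_n) : ~~ I (W d I i).
Proof.
have hi : (i < size (ups d I))%N by rewrite hu.
by have := mem_nth mono0 hi; rewrite mem_ups => /andP[].
Qed.
Lemma B_notI d I n (hd : size (downs d I) = n) (i : 'I_n) : ~~ I (B d I i).
Proof.
have hi : (i < size (downs d I))%N by rewrite hd.
by have := mem_nth mono0 hi; rewrite mem_downs => /andP[].
Qed.

Lemma abs_prod_sign n (f : 'I_n -> nat) : `|\prod_i ((-1) ^+ (f i) : int)| = 1.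
Proof.
apply: (big_ind (fun x : int => `|x| = 1)) => [|x y hx hy|i _].
- by rewrite normr1.
- by rewrite normrM hx hy mulr1.
- by rewrite normrX normrN1 expr1n.
Qed.

Lemma drL_Z d I n (hd : size (downs d I) = n) (hu : size (ups d I) = n) :
  `|\det (drsubmx (Lmat d I n (lstep I)))| = `|\det (Zmat d I n)|.
Proof.
have -> : drsubmx (Lmat d I n (lstep I)) =
   diag_mx (\row_i (-1)^+(ez (W d I i))) *m (Zmat d I n)^T *m
   diag_mx (\row_j (-1)^+(ez (B d I j)).+1).
  apply/matrixP => i j; rewrite mul_mx_diag mul_diag_mx !mxE.
  rewrite nth_Rl_r // nth_Cl_r // entry_Z ?W_notI ?B_notI //.
  by rewrite mulrAC.
rewrite !det_mulmx !det_diag det_tr !normrM.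
under eq_bigr do rewrite mxE.
rewrite abs_prod_sign.
under eq_bigr do rewrite mxE.
by rewrite abs_prod_sign mul1r mulr1.
Qed.

Set Implicit Arguments. Unset Strict Implicit. Unset Printing Implicit Defensive.
Local Open Scope ring_scope.

Lemma B_inj d I n (hd : size (downs d I) = n) (i j : 'I_n) : B d I i = B d I j -> i = j.
Proof.
move=> /eqP; rewrite /B nth_uniq ?hd ?uniq_downs // => /eqP h; exact: val_inj.
Qed.
Lemma W_inj d I n (hu : size (ups d I) = n) (i j : 'I_n) : W d I i = W d I j -> i = j.
Proof.
move=> /eqP; rewrite /W nth_uniq ?hu ?uniq_ups // => /eqP h; exact: val_inj.
Qed.

Lemma matched_B d I n (hd : size (downs d I) = n) (pi : 'S_n) (j : 'I_n) u :
  matched d I pi (B d I j) u = (W d I (pi j) == u).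
Proof.
apply/existsP/eqP => [[i /andP[/eqP Bi /eqP Wi]]|<-].
  by rewrite -(B_inj hd Bi).
by exists j; rewrite !eqxx.
Qed.

Lemma matched_ex d I n (pi : 'S_n) m u : matched d I pi m u ->
  exists i : 'I_n, m = B d I i /\ u = W d I (pi i).
Proof. by case/existsP => i /andP[/eqP <- /eqP <-]; exists i. Qed.

Lemma tstep_mz d I n (pi : 'S_n) u m :
  tstep d I pi u (mz m) =
  ((u == (ex m, (ey m).+1, ez m)) || (u == ((ex m).+1, ey m, ez m))) && matched d I pi m u.
Proof.
move: u m => [[a b] c] [[a' b'] c']; rewrite /tstep /mz /ex /ey /ez /=.
have [[-> -> ->]|n1] := eqVneq (a, b, c) (a', b'.+1, c').
  rewrite /= eqxx /= andbT.
  have -> : ((a', b', c'.+1) == (a'.-1, b'.+1, c'.+1)) = false.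
    by apply/negbTE/eqP => -[_ h]; lia.
  by rewrite !andbF orbF.
have [[-> -> ->]|n2] := eqVneq (a, b, c) (a'.+1, b', c').
  rewrite /= eqxx /= andbT.
  have -> : ((a', b', c'.+1) == (a'.+1, b'.-1, c'.+1)) = false.
    by apply/negbTE/eqP => -[h _]; lia.
  by rewrite !andbF.
rewrite /=; apply/negbTE/negP; case/orP => /andP[/andP[h _] /eqP [e1 e2 e3]].
  by move/negP: n1; apply; apply/eqP; congr (_,_,_); lia.
by move/negP: n2; apply; apply/eqP; congr (_,_,_); lia.
Qed.

Lemma adm_tstep d I n (pi : 'S_n) (hd : size (downs d I) = n) : adm I (tstep d I pi).
Proof.
split=> [[[a b] c] [[a' b'] c']|[[a b] c] [[a' b'] c']];
  rewrite /tstep /ex /ey /ez /=.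
  by case/orP => /andP[_ /eqP [_ _ ->]].
case/orP => /andP[/andP[_ /matched_ex [i [hm _]]] /eqP [-> -> ->]];
  rewrite /is_vert /on_down /ex /ey /ez /=; have := B_notI hd i; rewrite -hm => ->;
  by rewrite orbT.
Qed.

Lemma tstep_fun d I n (pi : 'S_n) (hd : size (downs d I) = n) (hu : size (ups d I) = n)
  u w1 w2 : tstep d I pi u w1 -> tstep d I pi u w2 -> w1 = w2.
Proof.
move: u => [[a b] c]; rewrite /tstep /ex /ey /ez /=.
have key : (0 < b)%N -> (0 < a)%N -> matched d I pi (a, b.-1, c) (a, b, c) ->
   matched d I pi (a.-1, b, c) (a, b, c) -> False.
  move=> hb ha /matched_ex [i [h1 h2]] /matched_ex [j [h3 h4]].
  have := W_inj hu (etrans (esym h2) h4) => /perm_inj eij; subst j.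
  by move: h3; rewrite -h1 => -[]; lia.
case/orP => /andP[/andP[h1 h2] /eqP ->]; case/orP => /andP[/andP[h3 h4] /eqP ->] //.
  by case: (key h1 h3 h2 h4).
by case: (key h3 h1 h4 h2).
Qed.

Lemma tstep_term d I n (pi : 'S_n) (hu : size (ups d I) = n) e w :
  e \in Evs d I -> tstep d I pi e w = false.
Proof.
rewrite mem_Evs /is_E /on_up => /andP[_ /andP[/negPn hI _]].
apply/negbTE; move: e hI => [[a b] c] hI; rewrite /tstep /ex /ey /ez /=.
apply/negP; case/orP => /andP[/andP[_ /matched_ex [i [_ h]]] _];
  by move: (W_notI hu (pi i)); rewrite -h hI.
Qed.

Lemma diag_val u m : adj m u ->
  ((u == mz m)%:R - ((u == (ex m, (ey m).+1, ez m)) || (u == ((ex m).+1, ey m, ez m)))%:R : int)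
  = - ((-1)^+(ez u) * (-1)^+(ez m)).
Proof.
move: u m => [[a b] c] [[a' b'] c']; rewrite /adj /mz /ex /ey /ez /= => h.
have [[ea eb ec]|n1] := eqVneq (a, b, c) (a', b', c'.+1).
  subst.
  rewrite !xpair_eqE ?eqxx ?(ltn_eqF (ltnSn _)) ?(gtn_eqF (ltnSn _)) ?andbF ?andbT ?orbF ?orbT /=.
  by rewrite exprS -mulrA sgn2 mulr1 opprK subr0.
have [[ea eb ec]|n2] := eqVneq (a, b, c) (a'.+1, b', c').
  by subst; rewrite orbT sgn2 sub0r.
have [[ea eb ec]|n3] := eqVneq (a, b, c) (a', b'.+1, c').
  by subst; rewrite sgn2 sub0r.
by move: h; rewrite (negbTE n1) (negbTE n2) (negbTE n3).
Qed.

Lemma ups_sorted d I : sorted revlex_le (ups d I).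
Proof. by case: d => [|k] //; rewrite /ups; apply: sort_sorted; exact: revlex_total. Qed.

Definition kappa d I n : int := (-1)^+n * (\prod_(a < n) (-1)^+(ez (W d I a))) *
  (\prod_(j < n) (-1)^+(ez (B d I j))).

Lemma detK d I n (pi : 'S_n) (hd : size (downs d I) = n) (hu : size (ups d I) = n) :
  is_tiling d I pi ->
  \det (drsubmx (Lmat d I n (tstep d I pi))) * (-1)^+pi = kappa d I n.
Proof.
move=> til.
set L22 := drsubmx (Lmat d I n (tstep d I pi)).
have entry : forall a b : 'I_n, col_perm (pi^-1)%g L22 a b =
   ((W d I a == mz (B d I ((pi^-1)%g b)))%:R -
    (((W d I a == (ex (B d I ((pi^-1)%g b)), (ey (B d I ((pi^-1)%g b))).+1, ez (B d I ((pi^-1)%g b))))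
    || (W d I a == ((ex (B d I ((pi^-1)%g b))).+1, ey (B d I ((pi^-1)%g b)), ez (B d I ((pi^-1)%g b)))))
     && (W d I b == W d I a))%:R).
  move=> a b; rewrite !mxE nth_Rl_r // nth_Cl_r // /Lf tstep_mz matched_B //.
  by rewrite permKV.
have adjb : forall b : 'I_n, adj (B d I ((pi^-1)%g b)) (W d I b).
  by move=> b; have := til ((pi^-1)%g b); rewrite permKV.
have -> : \det L22 * (-1)^+pi = \det (col_perm (pi^-1)%g L22).
  by rewrite col_permE det_mulmx det_perm invgK.
rewrite -det_tr det_trig; last first.
  apply/is_trig_mxP => i j ij; rewrite mxE entry.
  have -> : (W d I i == W d I j) = false.
    by apply/negbTE/eqP => /(W_inj hu) eij; move: ij; rewrite eij ltnn.
  rewrite andbF subr0.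
  case: eqP => // hWj.
  have := adjb i; rewrite /adj -/(mz _) -hWj.
  have -> : (W d I i == W d I j) = false.
    by apply/negbTE/eqP => /(W_inj hu) eij; move: ij; rewrite eij ltnn.
  rewrite orbF => hx.
  have hs := sorted_leq_nth revlex_trans revlex_refl mono0 (s := ups d I) (ups_sorted d I).
  have := hs i j; rewrite !inE hu => /(_ (ltn_ord i) (ltn_ord j) (ltnW ij)).
  rewrite -/(W d I i) -/(W d I j) hWj /revlex_le /mz /=.
  move: hx; set m := B d I _; case/orP => /eqP ->; rewrite /ez /=; lia.
under eq_bigr do rewrite mxE entry eqxx andbT diag_val //.
rewrite prodrN card_ord big_split /= /kappa -mulrA; congr (_ * (_ * _)).
by rewrite [RHS](reindex_inj (@perm_inj _ (pi^-1)%g)).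
Qed.

Set Implicit Arguments. Unset Strict Implicit. Unset Printing Implicit Defensive.
Local Open Scope ring_scope.

Lemma count_le1 (T : eqType) (s : seq T) (P : pred T) : uniq s ->
  (forall x y, P x -> P y -> x = y) -> (count P s <= 1)%N.
Proof.
move=> us hP; case: (boolP (has P s)) => [/hasP[x xs Px]|/hasPn h].
  rewrite (@eq_in_count _ _ (pred1 x)); first by rewrite count_uniq_mem // xs.
  move=> y ys /=; apply/idP/eqP => [Py|->//]; exact: hP.
by rewrite (@eq_in_count _ _ pred0) ?count_pred0 // => y /h /negbTE.
Qed.

Lemma sum_bool_count (T : eqType) (s : seq T) (P : pred T) :
  (\sum_(x <- s) (P x : nat) = count P s)%N.
Proof.
by rewrite -sum1_count [RHS]big_mkcond /=; apply: eq_bigr => x _; case: (P x).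
Qed.

Lemma sum_le1 (Wl Es : seq mono) (G : rel mono) : uniq Es -> uniq Wl ->
  (forall u w1 w2, G u w1 -> G u w2 -> w1 = w2) ->
  (forall e w, e \in Es -> G e w = false) ->
  forall k u, (\sum_(e <- Es) npaths Wl G k u e <= 1)%N.
Proof.
move=> uE uW hf ht; elim => [|k IH] u.
  rewrite /= sum_bool_count; by apply: count_le1 => // x y /eqP <- /eqP.
under eq_bigr do rewrite npathsS.
rewrite big_split /= exchange_big /=.
case: (boolP (u \in Es)) => uEs.
  rewrite [X in (_ + X)%N]big1_seq ?addn0; last first.
    by move=> w _; rewrite big1 // => e _; rewrite ht.
  rewrite sum_bool_count; by apply: count_le1 => // x y /eqP <- /eqP.
rewrite [X in (X + _)%N]big1_seq ?add0n; last first.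
  by move=> e /andP[_ eE]; apply/eqP; rewrite eqb0; apply: contra uEs => /eqP ->.
apply: (@leq_trans (\sum_(w <- Wl) (G u w : nat))).
  apply: leq_sum => w _; rewrite -big_distrr /=.
  by case: (G u w); rewrite ?mul1n ?mul0n.
rewrite sum_bool_count; apply: count_le1 => // x y; exact: hf.
Qed.

Lemma perm_rows k (M : 'M[int]_k) (f : 'I_k -> 'I_k -> nat) :
  (forall i j, M i j = (f i j)%:R) -> (forall i, (\sum_j f i j <= 1)%N) -> \det M != 0 ->
  exists s : 'S_k, forall i j, f i j = (s i == j).
Proof.
move=> hM hs hdet.
have hrow : forall i, exists j, f i j != 0%N.
  move=> i; apply/existsP; apply: contraR hdet; rewrite negb_exists => /forallP h.
  apply/eqP; rewrite (expand_det_row _ i) big1 // => j _.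
  by rewrite hM; move: (h j); rewrite negbK => /eqP ->; rewrite mul0r.
have [g hg] := fin_all_exists hrow.
have fval : forall i j, f i j = (g i == j).
  move=> i j; have := hs i; rewrite (bigD1 (g i)) //=.
  have : (0 < f i (g i))%N by rewrite lt0n hg.
  case: eqP => [<-|/eqP ne].
    by move=> h1 h2; move: h1 h2; case: (f i (g i)) => // [[|]] //=; lia.
  move=> h1; rewrite (bigD1 j) /=; last by rewrite eq_sym.
  by lia.
have ginj : injective g.
  move=> i1 i2 e; apply/eqP; apply: contraR hdet => ne.
  apply/eqP; apply: (determinant_alternate ne) => j.
  by rewrite !hM !fval e.
by exists (perm ginj) => i j; rewrite permE fval.
Qed.

Set Implicit Arguments. Unset Strict Implicit. Unset Printing Implicit Defensive.
Local Open Scope ring_scope.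

Lemma part2 d I n (hd : size (downs d I) = n) (hu : size (ups d I) = n) :
  `|\det (Zmat d I n)| = `|\det (Nmat d I)|.
Proof.
rewrite -drL_Z // -(block_det (adm_lstep I) hd hu) normrM.
by rewrite (detL_unit (adm_lstep I) hd hu).1 mul1r ulC.
Qed.

Lemma kappa_abs d I n : `|kappa d I n| = 1.
Proof.
by rewrite /kappa !normrM !abs_prod_sign normrX normrN1 expr1n !mulr1.
Qed.

Lemma part1_val d I n (hd : size (downs d I) = n) (hu : size (ups d I) = n)
  (pi : 'S_n) : is_tiling d I pi ->
  sgn_pm d I pi * sgn_lp d I pi = \det (Lmat d I n (lstep I)) * kappa d I n.
Proof.
move=> til.
set c := \det (Lmat d I n (lstep I)).
have hc : c * c = 1 := (detL_unit (adm_lstep I) hd hu).2.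
have hadm := adm_tstep pi hd.
have hL : \det (Lmat d I n (tstep d I pi)) = c.
  by apply: det_L_const => //; [exact: hadm.1 | exact: (adm_lstep I).1].
have hb := block_det hadm hd hu.
have hK := detK hd hu til.
rewrite hL in hb.
set UL := ulsubmx (Cmat d I n (tstep d I pi)) in hb.
pose f (i j : 'I_(size (Avs d I))) :=
  npaths (labels d) (tstep d I pi) d (Av d I i) (Ev d I j).
have hUL : forall i j, UL i j = (f i j)%:R.
  by move=> i j; rewrite !mxE nth_Rl_l // nth_Cl_l.
have hEA : size (Evs d I) = size (Avs d I) by apply: size_EA; rewrite hu hd.
have hrow : forall i, (\sum_j f i j <= 1)%N.
  move=> i; have := sum_le1 (uniq_Evs d I) (uniq_labels d) (@tstep_fun d I n pi hd hu)
    (@tstep_term d I n pi hu) d (Av d I i).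
  by rewrite (big_nth mono0) hEA big_mkord.
have hkey : c * \det UL * (-1)^+pi = kappa d I n by rewrite hb.
have hdet : \det UL != 0.
  apply/eqP => h0; move: hkey; rewrite h0 mulr0 mul0r => /(congr1 Num.norm).
  by rewrite kappa_abs normr0.
have [s hs] := perm_rows hUL hrow hdet.
have hULs : UL = perm_mx s.
  apply/matrixP => i j; rewrite hUL hs /perm_mx !mxE.
  by [].
rewrite hULs det_perm in hkey.
have hlp : sgn_lp d I pi = (-1)^+s.
  rewrite /sgn_lp; case: pickP => [s' /forallP hs'|hn].
    have -> : s' = s.
      apply/permP => i; have := hs' i; rewrite /treach -/(f i (s' i)) hs lt0b.
      by move/eqP.
    by [].
  have := hn s; move/negP; case; apply/forallP => i.
  by rewrite /treach -/(f i (s i)) hs eqxx.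
rewrite /sgn_pm /psign hlp.
by rewrite -hkey !mulrA hc mul1r mulrC.
Qed.


Unset Implicit Arguments.
Local Open Scope ring_scope.

Theorem theorem4p6 (d : nat) (I : pred mono) (n : nat) :
  monomial_ideal I ->
  size (downs d I) = n -> size (ups d I) = n ->
  (forall pi pi' : 'S_n, is_tiling d I pi -> is_tiling d I pi' ->
     sgn_pm d I pi * sgn_lp d I pi = sgn_pm d I pi' * sgn_lp d I pi') /\
  `|\det (Zmat d I n)| = `|\det (Nmat d I)|.
Proof.
move=> _ hd hu; split; last exact: part2.
by move=> pi pi' t t'; rewrite !part1_val.
Qed.
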